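(* Let $d\ge1$, $n\ge3$, $u\in\mathbb{C}\setminus\{0\}$. The algebra $\mathrm{FTL}_{d,n}(u)$ is the algebra generated by $t_1,\ldots,t_n,g_1,\ldots,g_{n-1}$ subject to the defining relations of $\mathrm{Y}_{d,n}(u)$ together with the single relation $r_{1,2}=0$.
   Context: The Yokonuma–Hecke algebra $\mathrm{Y}_{d,n}(u)$ is the unital associative $\mathbb{C}$-algebra with generators $g_1,\ldots,g_{n-1},t_1,\ldots,t_n$ and relations: $g_ig_j=g_jg_i$ for $|i-j|>1$; $g_{i+1}g_ig_{i+1}=g_ig_{i+1}g_i$; $t_it_j=t_jt_i$; $t_i^d=1$; $g_it_i=t_{i+1}g_i$; $g_it_{i+1}=t_ig_i$; $g_it_j=t_jg_i$ for $j\ne i,i+1$; $g_i^2=1+(u-1)e_i+(u-1)e_ig_i$, where $e_i=\frac1d\sum_{s=0}^{d-1}t_i^st_{i+1}^{d-s}$. For $w\in S_n$ with reduced expression $s_{i_1}\cdots s_{i_k}$ put $g_w=g_{i_1}\cdots g_{i_k}$; $g_{i,i+1}=\sum_{w\in\langle s_i,s_{i+1}\rangle}g_w$ and $r_{i,i+1}=\sum_{a,b=0}^{d-1}t_i^{a}t_{i+1}^{b-a}t_{i+2}^{-b}\,g_{i,i+1}$. $\mathrm{FTL}_{d,n}(u)$ is defined as the quotient of $\mathrm{Y}_{d,n}(u)$ by the two-sided ideal generated by all $r_{i,i+1}$, $1\le i\le n-2$. *)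

(* Defs.v *)
From HB Require Import structures.
From mathcomp Require Import all_boot all_order all_algebra.
From mathcomp Require Import complex.
From mathcomp Require Import Rstruct.
Set Implicit Arguments. Unset Strict Implicit. Unset Printing Implicit Defensive.
Import Order.TTheory GRing.Theory Num.Theory.
Local Open Scope ring_scope.

Definition CC : Type := complex Rdefinitions.R.

Section YH.
Variable F : fieldType.
Variable A : algType F.
Variables (d n : nat) (u : F) (g t : nat -> A).

Definition yh_e (i : nat) : A :=
  (d%:R)^-1 *: \sum_(s < d) (t i ^+ s * t i.+1 ^+ (d - s)).

(* g_{i,i+1} = sum of g_w, w in <s_i, s_{i+1}> = S_3 (reduced expressions) *)
Definition yh_gblock (i : nat) : A :=
  1 + g i + g i.+1 + g i * g i.+1 + g i.+1 * g i + g i * g i.+1 * g i.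

(* r_{i,i+1} = sum_{a,b=0}^{d-1} t_i^a t_{i+1}^{b-a} t_{i+2}^{-b} g_{i,i+1};
   since t_j^d = 1, t^{b-a} = t^(b + (d - a)) and t^{-b} = t^(d - b). *)
Definition yh_r (i : nat) : A :=
  \sum_(a < d) \sum_(b < d)
     (t i ^+ a * t i.+1 ^+ (b + (d - a)) * t i.+2 ^+ (d - b) * yh_gblock i).

Definition YH_relations : Prop :=
  [/\ (forall i j, (1 <= i <= n.-1)%N -> (1 <= j <= n.-1)%N ->
         (i.+1 < j \/ j.+1 < i)%N -> g i * g j = g j * g i),
      (forall i, (1 <= i <= n - 2)%N -> g i.+1 * g i * g i.+1 = g i * g i.+1 * g i),
      (forall i j, (1 <= i <= n)%N -> (1 <= j <= n)%N -> t i * t j = t j * t i),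
      (forall i, (1 <= i <= n)%N -> t i ^+ d = 1)
    & [/\ (forall i, (1 <= i <= n.-1)%N -> g i * t i = t i.+1 * g i),
          (forall i, (1 <= i <= n.-1)%N -> g i * t i.+1 = t i * g i),
          (forall i j, (1 <= i <= n.-1)%N -> (1 <= j <= n)%N -> j != i -> j != i.+1 ->
             g i * t j = t j * g i)
        & (forall i, (1 <= i <= n.-1)%N ->
             g i ^+ 2 = 1 + (u - 1) *: yh_e i + (u - 1) *: (yh_e i * g i))]].
End YH.

(* Main.v *)
Require Import Defs.
From HB Require Import structures.
From mathcomp Require Import all_boot all_order all_algebra.
From mathcomp Require Import complex.
From mathcomp Require Import Rstruct.
From mathcomp Require Import zify ring.
Import GRing.Theory Num.Theory.
Local Open Scope ring_scope.
Lemma lin_aux (A : algType CC) (k c : CC) (E EG : A) :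
  k + c + c * k = 0 ->
  k*:E + k*:EG + c*:EG + c*:(E + k*:E + k*:EG) = 0.
Proof.
move=> H.
have H' : c * k = - (k + c) by apply/eqP; rewrite -addr_eq0 addrC H.
rewrite !scalerDr !scalerA H' !scaleNr !scalerDl !opprD.
rewrite (addrC (c*:E)) -!addrA. rewrite addKr. by rewrite addrCA (addrCA (c*:EG)) addNKr addrCA addNKr subrr.
Qed.
Lemma e_idem (A : algType CC) (d : nat) (t : nat -> A) j : (0 < d)%N ->
  t j * t j.+1 = t j.+1 * t j ->
  t j ^+ d = 1 -> t j.+1 ^+ d = 1 ->
  yh_e d t j * yh_e d t j = yh_e d t j.
Proof.
rewrite /yh_e; move: (t j) (t j.+1) => a b.
case: d => // d' _ ab ad bd.
set x := a * b ^+ d'.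
have xs : forall s : 'I_d'.+1, a ^+ s * b ^+ (d'.+1 - s) = x ^+ s.
  move=> [s /= sd]; case: s sd => [|s] sd.
    by rewrite expr0 subn0 bd mul1r.
  rewrite /x exprMn_comm; last by apply: commrX.
  rewrite -exprM.
  have -> : (d'.+1.-1 * s.+1 = (d'.+1 - s.+1) + d'.+1 * s)%N by lia.
  by rewrite exprD exprM bd expr1n mulr1.
have xd : x ^+ d'.+1 = 1.
  rewrite /x exprMn_comm; last by apply: commrX.
  by rewrite ad -exprM mulnC exprM bd expr1n mulr1.
under eq_bigr do rewrite xs.
set S := \sum_(s < d'.+1) x ^+ s.
have xS : x * S = S.
  rewrite /S mulr_sumr.
  rewrite big_ord_recr big_ord_recl /= -exprS xd expr0 addrC; congr (_ + _).
  by apply: eq_bigr => i _; rewrite -exprS.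
have xkS : forall k, x ^+ k * S = S.
  elim=> [|k IH]; first by rewrite mul1r.
  by rewrite exprSr -mulrA xS.
have SS : S * S = S *+ d'.+1.
  rewrite {1}/S mulr_suml (eq_bigr (fun _ => S)); last by move=> i _; rewrite xkS.
  by rewrite sumr_const card_ord.
have dn0 : (d'.+1%:R : CC) != 0 by rewrite pnatr_eq0 -lt0n.
rewrite -scalerAl -scalerAr SS -(scaler_nat d'.+1 S) !scalerA.
by rewrite divfK.
Qed.

Lemma ginv (A : algType CC) (d : nat) (u : CC) (g t : nat -> A) j :
  (0 < d)%N -> u != 0 ->
  t j * t j.+1 = t j.+1 * t j -> t j ^+ d = 1 -> t j.+1 ^+ d = 1 ->
  g j ^+ 2 = 1 + (u - 1) *: yh_e d t j + (u - 1) *: (yh_e d t j * g j) ->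
  exists h, h * g j = 1.
Proof.
move=> d0 u0 c1 e1 e2 Hq.
have ee := @e_idem A d t j d0 c1 e1 e2.
set e := yh_e d t j in ee Hq *. clearbody e.
set k := u - 1 in Hq *.
set c := u^-1 - 1.
exists (g j + c *: e + c *: (e * g j)).
rewrite !mulrDl -!scalerAl -!mulrA -expr2 Hq !mulrDr mulr1 -!scalerAr !mulrA ee.
have H : k + c + c * k = 0 by rewrite /k /c; field.
rewrite -[RHS]addr0 -(@lin_aux A k c e (e * g j) H).
by rewrite !addrA.
Qed.

Section Inter.
Variables (A : algType CC) (D : A).
Lemma iD_mul x1 x2 y1 y2 : x1 * D = D * y1 -> x2 * D = D * y2 ->
  (x1 * x2) * D = D * (y1 * y2).
Proof. by move=> h1 h2; rewrite -mulrA h2 mulrA h1 mulrA. Qed.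
Lemma iD_add x1 x2 y1 y2 : x1 * D = D * y1 -> x2 * D = D * y2 ->
  (x1 + x2) * D = D * (y1 + y2).
Proof. by move=> h1 h2; rewrite mulrDl mulrDr h1 h2. Qed.
Lemma iD_1 : 1 * D = D * 1.
Proof. by rewrite mul1r mulr1. Qed.
Lemma iD_exp x y k : x * D = D * y -> x ^+ k * D = D * y ^+ k.
Proof.
move=> h; elim: k => [|k IH]; first by rewrite !expr0 iD_1.
by rewrite !exprS; apply: iD_mul.
Qed.
Lemma iD_sum m (F F' : 'I_m -> A) : (forall a, F a * D = D * F' a) ->
  (\sum_(a < m) F a) * D = D * (\sum_(a < m) F' a).
Proof.
by move=> h; rewrite mulr_suml mulr_sumr; apply: eq_bigr => a _; apply: h.
Qed.
End Inter.

Lemma step (d n : nat) (u : CC) (A : algType CC) (g t : nat -> A) i :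
  (1 <= d)%N -> u != 0 -> YH_relations d n u g t ->
  (1 <= i)%N -> (i.+1 <= n - 2)%N ->
  yh_r d g t i = 0 -> yh_r d g t i.+1 = 0.
Proof.
move=> d0 u0 [Hc Hb Ht Hd [Hgt1 Hgt2 Hgt3 Hq]] i1 in2 r0.
set D := g i.+2 * g i.+1 * g i.
have P1 : g i * D = D * g i.+1.
  rewrite /D !mulrA (Hc i i.+2); try lia.
  rewrite -!mulrA; congr (_ * _); rewrite !mulrA; apply: esym; apply: Hb; lia.
have P2 : g i.+1 * D = D * g i.+2.
  rewrite /D !mulrA -(Hb i.+1); last by lia.
  by rewrite -!mulrA (Hc i i.+2) //; lia.
have T0 : t i * D = D * t i.+1.
  rewrite /D !mulrA -(Hgt3 i.+2 i); try lia.
  rewrite -(mulrA _ (t i)) -(Hgt3 i.+1 i); try lia.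
  by rewrite -!mulrA (Hgt2 i) //; lia.
have T1 : t i.+1 * D = D * t i.+2.
  rewrite /D !mulrA -(Hgt3 i.+2 i.+1); try lia.
  rewrite -(mulrA _ (t i.+1)) -(Hgt2 i.+1); try lia.
  by rewrite -!mulrA (Hgt3 i i.+2) //; lia.
have T2 : t i.+2 * D = D * t i.+3.
  rewrite /D !mulrA -(Hgt2 i.+2); try lia.
  rewrite -(mulrA _ (t i.+3)) -(Hgt3 i.+1 i.+3); try lia.
  by rewrite -!mulrA (Hgt3 i i.+3) //; lia.
have RD : yh_r d g t i * D = D * yh_r d g t i.+1.
  apply: iD_sum => a; apply: iD_sum => b.
  repeat first [apply: iD_mul | apply: iD_add | apply: iD_1 | apply: iD_exp].
  all: try eassumption.
have GI : forall j, (1 <= j)%N -> (j.+1 <= n)%N -> exists h, h * g j = 1.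
  move=> j j1 jn.
  apply: (@ginv A d u g t j d0 u0).
  - by apply: Ht; lia.
  - by apply: Hd; lia.
  - by apply: Hd; lia.
  - by apply: Hq; lia.
have [h0 H0] := GI i i1 ltac:(lia).
have [h1 H1] := GI i.+1 ltac:(lia) ltac:(lia).
have [h2 H2] := GI i.+2 ltac:(lia) ltac:(lia).
have HD : h0 * h1 * h2 * D = 1.
  by rewrite /D !mulrA -(mulrA _ h2) H2 mulr1 -(mulrA _ h1) H1 mulr1 H0.
transitivity (h0 * h1 * h2 * D * yh_r d g t i.+1); first by rewrite HD mul1r.
by rewrite -mulrA -RD r0 mul0r mulr0.
Qed.

Theorem corollary1 (d n : nat) (u : CC) :
  (1 <= d)%N -> (3 <= n)%N -> u != 0 ->
  forall (A : algType CC) (g t : nat -> A),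
    YH_relations d n u g t ->
    yh_r d g t 1 = 0 ->
    forall i, (1 <= i <= n - 2)%N -> yh_r d g t i = 0.
Proof.
move=> d1 n3 u0 A g t H r1 i /andP [i1 i2].
elim: i i1 i2 => [//|i IH] _ i2.
case: i IH i2 => [//|i] IH i2.
apply: (@step d n u A g t i.+1) => //.
by apply: IH => //; lia.
Qed.
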